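(* Let $\mathfrak B\in K_{\overline\alpha}$. Then there is a substructure $\mathfrak Z\subseteq\mathfrak B$ with $\delta(\mathfrak Z)=0$ such that every substructure $\mathfrak C\subseteq\mathfrak B$ with $\delta(\mathfrak C)=0$ satisfies $\mathfrak C\subseteq\mathfrak Z$.
   Context: Fix a finite relational language $L$ in which every relation symbol has arity at least $2$. $K_L$ is the class of all finite $L$-structures (including the empty one) in which every relation symbol is interpreted symmetrically and irreflexively. Fix $\overline\alpha:L\to(0,1]$, writing $\overline\alpha_E=\overline\alpha(E)$, such that it is not the case that all symbols of $L$ are binary and $\overline\alpha_E=1$ for all $E$. For $\mathfrak A\in K_L$ let $N_E(\mathfrak A)$ be the number of subsets of $A$ on which $E$ holds and $\delta(\mathfrak A)=|A|-\sum_{E}\overline\alpha_E N_E(\mathfrak A)$ (so $\delta(\emptyset)=0$). $K_{\overline\alpha}=\{\mathfrak A\in K_L:\delta(\mathfrak A')\ge0\text{ for all substructures }\mathfrak A'\subseteq\mathfrak A\}$. *)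

(* Defs.v *)
From mathcomp Require Import all_boot all_order all_algebra.
Set Implicit Arguments. Unset Strict Implicit. Unset Printing Implicit Defensive.
Import Order.TTheory GRing.Theory Num.Theory.
Local Open Scope ring_scope.

(* An L-structure in K_L (every relation symmetric and
   irreflexive) with finite universe [B] is given by, for each symbol E,
   the set [rel E] of subsets of B on which E holds; each such subset has
   exactly [ar E] elements. Substructures are the induced substructures on
   subsets [A : {set B}] (the empty one included). *)

Definition wf_structure (L B : finType) (ar : L -> nat)
    (rel : L -> {set {set B}}) : Prop :=
  forall E e, e \in rel E -> #|e| = ar E.

Definition NE (L B : finType) (rel : L -> {set {set B}}) (E : L)
    (A : {set B}) : nat :=
  #|[set e in rel E | e \subset A]|.

Definition delta (R : realFieldType) (L B : finType) (alpha : L -> R)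
    (rel : L -> {set {set B}}) (A : {set B}) : R :=
  (#|A|%:R - \sum_(E : L) alpha E * (NE rel E A)%:R)%R.

Definition in_Kalpha (R : realFieldType) (L B : finType) (alpha : L -> R)
    (rel : L -> {set {set B}}) : Prop :=
  forall A : {set B}, 0 <= delta alpha rel A.

(* Main.v *)
Require Import Defs.
From mathcomp Require Import all_boot all_order all_algebra.
Import Order.TTheory GRing.Theory Num.Theory.
Local Open Scope ring_scope.

Lemma NE_sub (L B : finType) (rel : L -> {set {set B}}) E (X Y : {set B}) :
  (NE rel E X + NE rel E Y <= NE rel E (X :|: Y) + NE rel E (X :&: Y))%N.
Proof.
rewrite /NE.
set SX := [set e in rel E | e \subset X].
set SY := [set e in rel E | e \subset Y].
rewrite -(cardsUI SX SY) leq_add //.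
  apply: subset_leq_card; apply/subsetP => e; rewrite !inE.
  case/orP => /andP [-> H] /=.
    by apply: subset_trans H (subsetUl _ _).
  by apply: subset_trans H (subsetUr _ _).
apply: subset_leq_card; apply/subsetP => e; rewrite !inE.
case/andP => /andP [-> H1] /andP [_ H2] /=.
by rewrite subsetI H1 H2.
Qed.

Lemma delta_sub (R : realFieldType) (L B : finType) (alpha : L -> R)
  (Halpha : forall E, 0 < alpha E <= 1)
  (rel : L -> {set {set B}}) (X Y : {set B}) :
  delta alpha rel (X :|: Y) + delta alpha rel (X :&: Y) <=
  delta alpha rel X + delta alpha rel Y.
Proof.
rewrite /delta.
have Hc : (#|X :|: Y|%:R + #|X :&: Y|%:R = #|X|%:R + #|Y|%:R :> R).
  by rewrite -!natrD cardsUI.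
have Hs : \sum_E alpha E * (NE rel E X)%:R + \sum_E alpha E * (NE rel E Y)%:R
  <= \sum_E alpha E * (NE rel E (X :|: Y))%:R + \sum_E alpha E * (NE rel E (X :&: Y))%:R.
  rewrite -!big_split /=; apply: ler_sum => E _.
  rewrite -!mulrDr; apply: ler_wpM2l.
    by case/andP: (Halpha E) => /ltW.
  by rewrite -!natrD ler_nat NE_sub.
set a := #|X :|: Y|%:R in Hc *.
set b := #|X :&: Y|%:R in Hc *.
set c := #|X|%:R in Hc *.
set d := #|Y|%:R in Hc *.
move: Hs Hc.
set s1 := \sum_E _; set s2 := \sum_E _; set s3 := \sum_E _; set s4 := \sum_E _.
move=> Hs Hc.
have -> : a - s3 + (b - s4) = (a + b) - (s3 + s4) by rewrite addrACA opprD.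
have -> : c - s1 + (d - s2) = (c + d) - (s1 + s2) by rewrite addrACA opprD.
by rewrite Hc lerB.
Qed.

Theorem proposition3p36 (R : realFieldType) (L : finType) (ar : L -> nat)
  (alpha : L -> R)
  (Har : forall E, (2 <= ar E)%N)
  (Halpha : forall E, 0 < alpha E <= 1)
  (Hnot : ~ (forall E, ar E = 2%N /\ alpha E = 1))
  (B : finType) (rel : L -> {set {set B}})
  (Hwf : wf_structure ar rel)
  (HK : in_Kalpha alpha rel) :
  exists Z : {set B},
    delta alpha rel Z = 0 /\
    forall C : {set B}, delta alpha rel C = 0 -> C \subset Z.
Proof.
exists (\bigcup_(C | delta alpha rel C == 0) C); split; last first.
  by move=> C HC; apply: bigcup_sup; apply/eqP.
apply: (big_rec (fun X => delta alpha rel X = 0)).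
  apply/eqP; rewrite eq_le HK andbT /delta cards0 sub0r oppr_le0.
  apply: sumr_ge0 => E _; apply: mulr_ge0 => //.
  by case/andP: (Halpha E) => /ltW.
move=> C X /eqP HC HX.
have H := @delta_sub R L B alpha Halpha rel C X.
rewrite HC HX addr0 in H.
have H1 := HK (C :|: X); have H2 := HK (C :&: X).
apply/eqP; rewrite eq_le H1 andbT.
by apply: le_trans H; rewrite lerDl.
Qed.
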